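(* For $n\geq 0$ let $D_n$ denote the $1\times n$ (one row, $n$ columns) misère \textsc{Domineering} rectangle, in which Left places vertical dominoes and Right places horizontal dominoes. Write $n=6k+r$ with $k\geq 0$, $0\leq r\leq 5$. Then, in every universe $\mathcal{U}$ (i.e. with respect to $\equiv_\mathcal{U}$ for every universe $\mathcal{U}$), $D_n$ is equal to: $k\cdot(\bar{1}0)_\#$ if $r\in\{0,1\}$; $k\cdot(\bar{1}0)_\#+\bar{1}$ if $r\in\{2,3\}$; $k\cdot(\bar{1}0)_\#+\bar{1}0$ if $r=4$; $k\cdot(\bar{1}0)_\#+\bar{2}$ if $r=5$.
   Context: Games are finite partizan games; $o(G)$ is the misère outcome class (ordered $\mathscr{L}>\mathscr{N}>\mathscr{R}$, $\mathscr{L}>\mathscr{P}>\mathscr{R}$). A universe is a set of games closed under options, disjunctive sums, conjugates, and forming $\{\mathscr{G}^L\mid\mathscr{G}^R\}$ from nonempty finite subsets of it; $G\equiv_\mathcal{U}H$ means $o(G+X)=o(H+X)$ for all $X\in\mathcal{U}$. Notation: $\bar{0}=0$, $\bar{m}=\{\cdot\mid\overline{m-1}\}$ for $m\geq1$ ($\cdot$ meaning no options); $\bar{1}0=\{\cdot\mid\bar{1},0\}$; $(\bar{1}0)_\#=\{\cdot\mid\bar{1}0\}$; $k\cdot G$ is the disjunctive sum of $k$ copies of $G$. *)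

(* Defs.v *)
From Stdlib Require List.
From mathcomp Require Import all_boot.

Set Implicit Arguments.
Unset Strict Implicit.
Unset Printing Implicit Defensive.

Inductive game : Type := Game : seq game -> seq game -> game.

Definition leftopts (G : game) : seq game := let: Game l _ := G in l.
Definition rightopts (G : game) : seq game := let: Game _ r := G in r.

(* Misere play: a player unable to move WINS.
   lwf G : Left, moving first in G, wins;  rwf G : Right, moving first, wins. *)
Fixpoint lwf (G : game) : bool :=
  match G with
  | Game l _ => nilp l || has (fun GL => ~~ rwf GL) l
  end
with rwf (G : game) : bool :=
  match G with
  | Game _ r => nilp r || has (fun GR => ~~ lwf GR) r
  end.

Inductive outcome : Type := OL | ON | OP | OR.

Definition o (G : game) : outcome :=
  match lwf G, rwf G with
  | true, false => OL
  | true, true => ON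
  | false, false => OP
  | false, true => OR
  end.

Fixpoint gadd (G : game) : game -> game :=
  fix gaddG (H : game) : game :=
    match G, H with
    | Game gl gr, Game hl hr =>
        Game ([seq gadd g H | g <- gl] ++ [seq gaddG h | h <- hl])
             ([seq gadd g H | g <- gr] ++ [seq gaddG h | h <- hr])
    end.

Fixpoint gconj (G : game) : game :=
  match G with
  | Game l r => Game [seq gconj x | x <- r] [seq gconj x | x <- l]
  end.

Definition universe (U : game -> Prop) : Prop :=
  [/\ (forall G GL, U G -> List.In GL (leftopts G) -> U GL),
      (forall G GR, U G -> List.In GR (rightopts G) -> U GR),
      (forall G H, U G -> U H -> U (gadd G H)),
      (forall G, U G -> U (gconj G)) &
      (forall l r : seq game, l <> [::] -> r <> [::] ->
         (forall x, List.In x l -> U x) -> (forall x, List.In x r -> U x) ->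
         U (Game l r))].

Definition equivU (U : game -> Prop) (G H : game) : Prop :=
  forall X, U X -> o (gadd G X) = o (gadd H X).

Definition gzero : game := Game [::] [::].

Fixpoint gbar (m : nat) : game :=
  match m with
  | 0 => gzero
  | m'.+1 => Game [::] [:: gbar m']
  end.

Definition gbar1_0 : game := Game [::] [:: gbar 1; gzero].

Definition gsharp : game := Game [::] [:: gbar1_0].

Fixpoint gmul (k : nat) (G : game) : game :=
  match k with
  | 0 => gzero
  | k'.+1 => gadd G (gmul k' G)
  end.

(* Domineering on a finite board given as a list of cells (x, y) = (column, row).
   The fuel bounds the number of moves; it is taken to be the number of cells,
   which is never exhausted prematurely on duplicate-free boards. *)
Definition remove2 (c d : nat * nat) (b : seq (nat * nat)) : seq (nat * nat) :=
  [seq e <- b | (e != c) && (e != d)].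

Fixpoint domin (fuel : nat) (b : seq (nat * nat)) : game :=
  match fuel with
  | 0 => gzero
  | f.+1 =>
      Game [seq domin f (remove2 c (c.1, c.2.+1) b)
             | c <- b & (c.1, c.2.+1) \in b]
           [seq domin f (remove2 c (c.1.+1, c.2) b)
             | c <- b & (c.1.+1, c.2) \in b]
  end.

Definition strip (n : nat) : seq (nat * nat) := [seq (i, 0) | i <- iota 0 n].

Definition D (n : nat) : game := domin (size (strip n)) (strip n).

(* Main.v *)
Require Import Defs.
From mathcomp Require Import all_boot zify.

Set Implicit Arguments.
Unset Strict Implicit.
Unset Printing Implicit Defensive.

Lemma all_In (T : Type) (p : T -> bool) (s : seq T) :
  all p s <-> (forall x, List.In x s -> p x).
Proof.
elim: s => [|a s IH] /=; first by split.
split.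
- by move/andP=> [pa /IH H] x [<-|/H].
- move=> H; apply/andP; split; first by apply: H; left.
  by apply/IH => x hx; apply: H; right.
Qed.

Lemma has_In (T : Type) (p : T -> bool) (s : seq T) :
  has p s <-> (exists x, List.In x s /\ p x).
Proof.
elim: s => [|a s IH] /=; first by split => // [[x []]].
split.
- case/orP=> [pa|/IH [x [hx px]]]; first by exists a; split => //; left.
  by exists x; split => //; right.
- move=> [x [[<-|hx] px]]; first by rewrite px.
  by apply/orP; right; apply/IH; exists x.
Qed.

Lemma In_map_iff (A B : Type) (f : A -> B) (s : seq A) y :
  List.In y (map f s) <-> exists x, f x = y /\ List.In x s.
Proof. exact: List.in_map_iff. Qed.

Lemma In_cat (A : Type) (s t : seq A) x :
  List.In x (s ++ t) <-> List.In x s \/ List.In x t.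
Proof. split; [exact: List.in_app_or | exact: List.in_or_app]. Qed.

Fixpoint gsize (G : game) : nat :=
  match G with Game l r => (sumn (map gsize l) + sumn (map gsize r)).+1 end.

Lemma In_sumn g l : List.In g l -> gsize g <= sumn (map gsize l).
Proof.
elim: l => [|a l IH] //= [<-|/IH h]; first exact: leq_addr.
by apply: leq_trans h (leq_addl _ _).
Qed.

Lemma size_l g G : List.In g (leftopts G) -> gsize g < gsize G.
Proof. case: G => l r /= /In_sumn h; rewrite ltnS; exact: leq_trans h (leq_addr _ _). Qed.
Lemma size_r g G : List.In g (rightopts G) -> gsize g < gsize G.
Proof. case: G => l r /= /In_sumn h; rewrite ltnS; exact: leq_trans h (leq_addl _ _). Qed.

Fixpoint ld (G : game) : bool :=
  match G with Game l r => nilp l && all ld r end.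

Fixpoint geb (G H : game) {struct G} : bool :=
  match G with
  | Game _ gr => (~~ nilp gr || nilp (rightopts H)) &&
                 all (fun g => has (fun h => geb g h) (rightopts H)) gr
  end.

Lemma geb_eq G H : geb G H =
  (~~ nilp (rightopts G) || nilp (rightopts H)) &&
  all (fun g => has (fun h => geb g h) (rightopts H)) (rightopts G).
Proof. by case: G. Qed.

Lemma ld_eq G : ld G = nilp (leftopts G) && all ld (rightopts G).
Proof. by case: G. Qed.

Lemma gadd_eq G X : gadd G X =
  Game ([seq gadd g X | g <- leftopts G] ++ [seq gadd G x | x <- leftopts X])
       ([seq gadd g X | g <- rightopts G] ++ [seq gadd G x | x <- rightopts X]).
Proof. by case: G; case: X. Qed.

Lemma lwf_eq G : lwf G = nilp (leftopts G) || has (fun g => ~~ rwf g) (leftopts G).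
Proof. by case: G. Qed.
Lemma rwf_eq G : rwf G = nilp (rightopts G) || has (fun g => ~~ lwf g) (rightopts G).
Proof. by case: G. Qed.

Lemma ld_nil G : ld G -> leftopts G = [::].
Proof. by rewrite ld_eq => /andP [/nilP]. Qed.
Lemma ld_r G g : ld G -> List.In g (rightopts G) -> ld g.
Proof. by rewrite ld_eq => /andP [_ /all_In H] /H. Qed.

Lemma sem n : forall G H X, gsize G + gsize X < n -> ld G -> ld H -> geb G H ->
  (lwf (gadd H X) -> lwf (gadd G X)) /\ (rwf (gadd G X) -> rwf (gadd H X)).
Proof.
elim: n => // n IH G H X hs lG lH gGH.
have eG := ld_nil lG; have eH := ld_nil lH.
move: gGH; rewrite geb_eq => /andP [leaf /all_In sim].
split.
- rewrite !lwf_eq !gadd_eq /= eG eH /= /nilp !size_map.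
  case/orP => [->//|/has_In [y [hy ny]]]; apply/orP; right; apply/has_In.
  move/In_map_iff: hy => [x [ex hx]]; subst y; exists (gadd G x); split.
    by apply/In_map_iff; exists x.
  apply/negP => hG; move/negP: ny; apply.
  have := IH G H x _ lG lH; rewrite geb_eq leaf /=.
  have := size_l hx; move=> sx.
  case => //; first by lia.
  - by apply/all_In.
  - move=> _ h; exact: h.
- rewrite !rwf_eq !gadd_eq /= .
  case/orP => [|/has_In [y [hy ny]]].
  + rewrite /nilp size_cat !size_map addn_eq0 => /andP [hg hx]; move: leaf; rewrite /nilp hg /= => hh.
    by rewrite /nilp size_cat !size_map (eqP hh) (eqP hx).
  + apply/orP; right; apply/has_In.
    case/In_cat: hy => /In_map_iff [x [ex hx]]; subst y.
    * have := sim x hx => /has_In [h [hh gxh]].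
      exists (gadd h X); split; first by apply/In_cat; left; apply/In_map_iff; exists h.
      apply/negP => lh; move/negP: ny; apply.
      have := IH x h X _ (ld_r lG hx) (ld_r lH hh) gxh.
      have := size_r hx => sx.
      case => //; first by lia.
      by move=> /(_ lh).
    * exists (gadd H x); split; first by apply/In_cat; right; apply/In_map_iff; exists x.
      apply/negP => lh; move/negP: ny; apply.
      have := IH G H x _ lG lH; rewrite geb_eq leaf /=.
      have := size_r hx => sx.
      case => //; first by lia.
      - by apply/all_In.
      - by move=> /(_ lh).
Qed.

Lemma sem_equiv (U : game -> Prop) G H : ld G -> ld H -> geb G H -> geb H G -> equivU U G H.
Proof.
move=> lG lH g1 g2 X _.
have [a1 b1] := @sem _ G H X (ltnSn _) lG lH g1.
have [a2 b2] := @sem _ H G X (ltnSn _) lH lG g2.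
have e1 : lwf (gadd G X) = lwf (gadd H X) by apply/idP/idP.
have e2 : rwf (gadd G X) = rwf (gadd H X) by apply/idP/idP.
by rewrite /o e1 e2.
Qed.

Lemma geb_intro G H :
  (rightopts G = [::] -> rightopts H = [::]) ->
  (forall g, List.In g (rightopts G) -> exists h, List.In h (rightopts H) /\ geb g h) ->
  geb G H.
Proof.
move=> h1 h2; rewrite geb_eq; apply/andP; split.
  case: (rightopts G) h1 => [/(_ erefl) -> //|//].
by apply/all_In => g /h2 [h [hh gh]]; apply/has_In; exists h.
Qed.

Lemma geb_elim G H : geb G H ->
  (rightopts G = [::] -> rightopts H = [::]) /\
  (forall g, List.In g (rightopts G) -> exists h, List.In h (rightopts H) /\ geb g h).
Proof.
rewrite geb_eq => /andP [h1 /all_In h2]; split.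
  by move=> e; move: h1; rewrite e /=; case: (rightopts H).
by move=> g /h2 /has_In.
Qed.

Lemma geb_refl_n n : forall G, gsize G < n -> geb G G.
Proof.
elim: n => // n IH G hs; apply: geb_intro => // g hg; exists g; split => //.
apply: IH; have := size_r hg; lia.
Qed.
Lemma geb_refl G : geb G G.
Proof. exact: (geb_refl_n (ltnSn _)). Qed.

Lemma geb_trans_n n : forall G H K, gsize G < n -> geb G H -> geb H K -> geb G K.
Proof.
elim: n => // n IH G H K hs /geb_elim [a1 b1] /geb_elim [a2 b2].
apply: geb_intro => [/a1 /a2 //|g hg].
have [h [hh gh]] := b1 g hg; have [k [hk hk']] := b2 h hh.
exists k; split => //; apply: IH gh hk'; have := size_r hg; lia.
Qed.
Lemma geb_trans G H K : geb G H -> geb H K -> geb G K.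
Proof. exact: (geb_trans_n (ltnSn _)). Qed.

Lemma rightopts_add G X : rightopts (gadd G X) =
  [seq gadd g X | g <- rightopts G] ++ [seq gadd G x | x <- rightopts X].
Proof. by rewrite gadd_eq. Qed.
Lemma leftopts_add G X : leftopts (gadd G X) =
  [seq gadd g X | g <- leftopts G] ++ [seq gadd G x | x <- leftopts X].
Proof. by rewrite gadd_eq. Qed.

Lemma cat_nil (A : Type) (s t : seq A) : s ++ t = [::] -> s = [::] /\ t = [::].
Proof. by case: s; case: t. Qed.
Lemma map_nil (A B : Type) (f : A -> B) s : map f s = [::] -> s = [::].
Proof. by case: s. Qed.

Lemma geb_add_n n : forall G H K, gsize G + gsize K < n -> geb G H ->
  geb (gadd G K) (gadd H K) /\ geb (gadd K G) (gadd K H).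
Proof.
elim: n => // n IH G H K hs gGH; have [a1 b1] := geb_elim gGH.
split; apply: geb_intro; rewrite !rightopts_add.
- by move=> /cat_nil [/map_nil /a1 -> /map_nil ->].
- move=> g /In_cat [] /In_map_iff [x [ex hx]]; subst g.
  + have [h [hh gh]] := b1 x hx; exists (gadd h K); split.
      by apply/In_cat; left; apply/In_map_iff; exists h.
    have := size_r hx => sx; by case: (IH x h K ltac:(lia) gh).
  + exists (gadd H x); split.
      by apply/In_cat; right; apply/In_map_iff; exists x.
    have := size_r hx => sx; by case: (IH G H x ltac:(lia) gGH).
- by move=> /cat_nil [/map_nil -> /map_nil /a1 ->].
- move=> g /In_cat [] /In_map_iff [x [ex hx]]; subst g.
  + exists (gadd x H); split.
      by apply/In_cat; left; apply/In_map_iff; exists x.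
    have := size_r hx => sx; by case: (IH G H x ltac:(lia) gGH).
  + have [h [hh gh]] := b1 x hx; exists (gadd K h); split.
      by apply/In_cat; right; apply/In_map_iff; exists h.
    have := size_r hx => sx; by case: (IH x h K ltac:(lia) gh).
Qed.

Lemma geb_addr G H K : geb G H -> geb (gadd G K) (gadd H K).
Proof. by move=> h; case: (geb_add_n (ltnSn (gsize G + gsize K)) h). Qed.
Lemma geb_addl G H K : geb G H -> geb (gadd K G) (gadd K H).
Proof. by move=> h; case: (geb_add_n (ltnSn (gsize G + gsize K)) h). Qed.
Lemma geb_add G H G' H' : geb G H -> geb G' H' -> geb (gadd G G') (gadd H H').
Proof. move=> h1 h2; apply: geb_trans (geb_addr _ h1) (geb_addl _ h2). Qed.

Lemma ld_add_n n : forall G K, gsize G + gsize K < n -> ld G -> ld K -> ld (gadd G K).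
Proof.
elim: n => // n IH G K hs lG lK.
rewrite ld_eq leftopts_add rightopts_add (ld_nil lG) (ld_nil lK) /=.
apply/all_In => g /In_cat [] /In_map_iff [x [ex hx]]; subst g.
- apply: IH (ld_r lG hx) lK; have := size_r hx; lia.
- apply: IH lG (ld_r lK hx); have := size_r hx; lia.
Qed.
Lemma ld_add G K : ld G -> ld K -> ld (gadd G K).
Proof. exact: (ld_add_n (ltnSn _)). Qed.

Fixpoint J (p q : nat) {struct q} : game :=
  match q with
  | 0 => gzero
  | q1.+1 => if p is p1.+1 then
      Game [::] ((if q1.+1 < 2 * p then [:: J p1 q1] else [::]) ++
                 (if p < q1.+1 then J p q1 :: (if q1 is q2.+1 then [:: J p1 q2] else [::])
                  else [::]))
    else gzero
  end.

Definition Oin p q a b : Prop :=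
  (q < 2 * p /\ a = p - 1 /\ b = q - 1) \/ (p < q /\ a = p /\ b = q - 1) \/
  (p < q /\ a = p - 1 /\ b = q - 2).

Lemma pickO p q (P : nat -> nat -> Prop) :
  (q < 2 * p /\ P (p - 1) (q - 1)) \/ (p < q /\ P p (q - 1)) \/ (p < q /\ P (p - 1) (q - 2)) ->
  exists a b, Oin p q a b /\ P a b.
Proof.
case=> [[h1 h2]|[[h1 h2]|[h1 h2]]].
- by exists (p - 1), (q - 1); split => //; left.
- by exists p, (q - 1); split => //; right; left.
- by exists (p - 1), (q - 2); split => //; right; right.
Qed.

Lemma J0 q : J 0 q = gzero.
Proof. by case: q. Qed.

Lemma J_opts p q : 0 < p -> p <= q -> forall g,
  List.In g (rightopts (J p q)) <-> exists a b, g = J a b /\ Oin p q a b.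
Proof.
case: q => [|q1]; first by lia.
case: p => [|p1] // _ hpq g /=.
rewrite In_cat; split.
- case.
  + case: ifP => //= h [<-|//]; exists p1, q1; split => //; left; lia.
  + case: ifP => //= h [<-|]; first by exists p1.+1, q1; split => //; right; left; lia.
    case: q1 h hpq => [|q2] //= h hpq [<-|//].
    exists p1, q2; split => //; right; right; lia.
- move=> [a [b [-> ho]]]; rewrite /Oin in ho.
  case: ho => [[h1 [-> ->]]|[[h1 [-> ->]]|[h1 [-> ->]]]].
  + by left; rewrite h1 /= !subSS !subn0; left.
  + by right; rewrite h1 /= !subSS !subn0; left.
  + right; rewrite h1 /=; case: q1 h1 hpq => [|q2] h1 hpq; first by lia.
    by right; rewrite !subSS !subn0 /=; left.
Qed.

Definition valid p q := (p <= q) && (q <= 2 * p).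

Lemma J_nil p q : valid p q -> rightopts (J p q) = [::] -> p = 0.
Proof.
move=> /andP [h1 h2] e; case: (posnP p) => // hp.
have [a [b [ho _]]] : exists a b, Oin p q a b /\ True by apply: pickO; lia.
have : List.In (J a b) (rightopts (J p q)) by apply/J_opts => //; exists a, b.
by rewrite e.
Qed.

Lemma Oin_valid p q a b : valid p q -> 0 < p -> Oin p q a b -> valid a b /\ b < q.
Proof. move=> /andP [h1 h2] hp; rewrite /valid /Oin; lia. Qed.

Lemma J_ld_n n : forall p q, q < n -> ld (J p q).
Proof.
elim: n => // n IH p q hq; case: q hq => [|q1] hq //; case: p => [|p1] //=.
apply/all_In => g /In_cat [].
- by case: ifP => //= _ [<-|//]; apply: IH; lia.
- case: ifP => //= _ [<-|]; first by apply: IH; lia.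
  case: q1 hq => [|q2] //= hq [<-|//]; apply: IH; lia.
Qed.
Lemma J_ld p q : ld (J p q).
Proof. exact: (@J_ld_n q.+1 p q (ltnSn q)). Qed.

Lemma J_mono_n n : forall p q p' q', q < n -> valid p q -> valid p' q' -> p' <= p -> q <= q' ->
  geb (J p q) (J p' q').
Proof.
elim: n => // n IH p q p' q' hn v v' h1 h2.
case: (posnP p) => [hp0|hp].
  rewrite hp0 J0; apply: geb_intro => // _.
  have -> : p' = 0 by lia.
  by rewrite J0.
have hp' : 0 < p' by move: v v'; rewrite /valid; lia.
apply: geb_intro.
  move=> e; exfalso; have := J_nil v e; lia.
move=> g /J_opts; case/(_ hp _) => [|a [b [-> ho]]]; first by move: v => /andP[].
have [va bq] := Oin_valid v hp ho.
have [c [d [ho' hcd]]] : exists c d, Oin p' q' c d /\ (c <= a /\ b <= d).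
  apply: (pickO (P := fun c d => c <= a /\ b <= d)); move: ho v v'; rewrite /Oin /valid; lia.
exists (J c d); split; first by apply/J_opts => //; [move: v' => /andP[] | exists c, d].
have [vc _] := Oin_valid v' hp' ho'.
apply: IH => //; lia.
Qed.
Lemma J_mono p q p' q' : valid p q -> valid p' q' -> p' <= p -> q <= q' ->
  geb (J p q) (J p' q').
Proof. exact: (@J_mono_n q.+1 p q p' q' (ltnSn q)). Qed.

Lemma Oin_pos p q a b : valid p q -> Oin p q a b -> 0 < p.
Proof. rewrite /valid /Oin; lia. Qed.

Lemma J_add_n n : forall p1 q1 p2 q2, q1 + q2 < n -> valid p1 q1 -> valid p2 q2 ->
  geb (gadd (J p1 q1) (J p2 q2)) (J (p1 + p2) (q1 + q2)) /\
  geb (J (p1 + p2) (q1 + q2)) (gadd (J p1 q1) (J p2 q2)).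
Proof.
elim: n => // n IH p1 q1 p2 q2 hn v1 v2.
have v : valid (p1 + p2) (q1 + q2) by move: v1 v2; rewrite /valid; lia.
have vl : p1 + p2 <= q1 + q2 by move: v => /andP[].
split.
- apply: geb_intro.
  + rewrite rightopts_add => /cat_nil [/map_nil e1 /map_nil e2].
    have h1 := J_nil v1 e1; have h2 := J_nil v2 e2.
    by rewrite h1 h2 J0.
  + move=> g; rewrite rightopts_add => /In_cat [] /In_map_iff [x [ex hx]]; subst g.
    * case: (posnP p1) hx => [h0|hp1] hx; first by move: hx; rewrite h0 J0.
      have hq1 : p1 <= q1 by move: v1 => /andP[].
      move/(J_opts hp1 hq1): hx => [a [b [-> ho]]].
      have [va bq] := Oin_valid v1 hp1 ho.
      have [c [d [ho' hcd]]] : exists c d, Oin (p1 + p2) (q1 + q2) c d /\ (c <= a + p2 /\ b + q2 <= d).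
        apply: (pickO (P := fun c d => c <= a + p2 /\ b + q2 <= d)).
        move: ho v1 v2 va; rewrite /Oin /valid; lia.
      have hp : 0 < p1 + p2 by lia.
      exists (J c d); split; first by apply/J_opts => //; exists c, d.
      have [vc _] := Oin_valid v hp ho'.
      have [i1 _] := IH a b p2 q2 ltac:(lia) va v2.
      apply: geb_trans i1 _; apply: J_mono => //; move: va v1 v2 vc hcd; rewrite /valid; lia.
    * case: (posnP p2) hx => [h0|hp2] hx; first by move: hx; rewrite h0 J0.
      have hq2 : p2 <= q2 by move: v2 => /andP[].
      move/(J_opts hp2 hq2): hx => [a [b [-> ho]]].
      have [va bq] := Oin_valid v2 hp2 ho.
      have [c [d [ho' hcd]]] : exists c d, Oin (p1 + p2) (q1 + q2) c d /\ (c <= p1 + a /\ q1 + b <= d).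
        apply: (pickO (P := fun c d => c <= p1 + a /\ q1 + b <= d)).
        move: ho v1 v2 va; rewrite /Oin /valid; lia.
      have hp : 0 < p1 + p2 by lia.
      exists (J c d); split; first by apply/J_opts => //; exists c, d.
      have [vc _] := Oin_valid v hp ho'.
      have [i1 _] := IH p1 q1 a b ltac:(lia) v1 va.
      apply: geb_trans i1 _; apply: J_mono => //; move: va v1 v2 vc hcd; rewrite /valid; lia.
- apply: geb_intro.
  + move=> e; have h0 := J_nil v e.
    have -> : p1 = 0 by lia.
    have -> : p2 = 0 by lia.
    by rewrite !J0.
  + move=> g hg.
    case: (posnP (p1 + p2)) hg => [h0|hp] hg; first by move: hg; rewrite h0 J0.
    move/(J_opts hp vl): hg => [c [d [-> ho]]].
    have [vc dq] := Oin_valid v hp ho.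
    have : (exists a b, Oin p1 q1 a b /\ (a + p2 <= c /\ d <= b + q2)) \/
           (exists a b, Oin p2 q2 a b /\ (p1 + a <= c /\ d <= q1 + b)).
      move: v1 v2; rewrite /valid => /andP [v1a v1b] /andP [v2a v2b].
      case: ho => [[hq [-> ->]]|[[hq [-> ->]]|[hq [-> ->]]]].
      + case: (ltnP q1 (2 * p1)) => h.
          left; apply: pickO; left; split => //; lia.
        right; apply: pickO; left; split; lia.
      + case: (ltnP p1 q1) => h.
          left; apply: pickO; right; left; split => //; lia.
        right; apply: pickO; right; left; split; lia.
      + case: (ltnP p1 q1) => h.
          left; apply: pickO; right; right; split => //; lia.
        right; apply: pickO; right; right; split; lia.
    case=> [[a [b [ho1 hab]]]|[a [b [ho2 hab]]]].
    * have hp1 := Oin_pos v1 ho1.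
      have [va bq] := Oin_valid v1 hp1 ho1.
      exists (gadd (J a b) (J p2 q2)); split.
        rewrite rightopts_add; apply/In_cat; left; apply/In_map_iff; exists (J a b); split => //.
        by apply/J_opts => //; [move: v1 => /andP[] | exists a, b].
      have [_ i2] := IH a b p2 q2 ltac:(lia) va v2.
      apply: geb_trans _ i2; apply: J_mono => //; move: va v1 v2 vc hab; rewrite /valid; lia.
    * have hp2 := Oin_pos v2 ho2.
      have [va bq] := Oin_valid v2 hp2 ho2.
      exists (gadd (J p1 q1) (J a b)); split.
        rewrite rightopts_add; apply/In_cat; right; apply/In_map_iff; exists (J a b); split => //.
        by apply/J_opts => //; [move: v2 => /andP[] | exists a, b].
      have [_ i2] := IH p1 q1 a b ltac:(lia) v1 va.
      apply: geb_trans _ i2; apply: J_mono => //; move: va v1 v2 vc hab; rewrite /valid; lia.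
Qed.

Lemma J_add p1 q1 p2 q2 : valid p1 q1 -> valid p2 q2 ->
  geb (gadd (J p1 q1) (J p2 q2)) (J (p1 + p2) (q1 + q2)) /\
  geb (J (p1 + p2) (q1 + q2)) (gadd (J p1 q1) (J p2 q2)).
Proof. exact: (@J_add_n (q1 + q2).+1 p1 q1 p2 q2 (ltnSn _)). Qed.

Lemma filter_lt (T : eqType) (p : pred T) (s : seq T) x :
  x \in s -> ~~ p x -> size (filter p s) < size s.
Proof.
move=> hx hp; rewrite size_filter -(count_predC p s) -addn1 leq_add2l.
by rewrite -has_count; apply/hasP; exists x.
Qed.

Lemma size_remove2 c d b : c \in b -> d \in b -> c != d ->
  size (remove2 c d b) + 2 <= size b.
Proof.
rewrite /remove2; elim: b => [|e b IH] //=.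
rewrite !inE => hc hd hcd.
case: (eqVneq e c) => [ec|ec].
  subst e => /=.
  have hd' : d \in b by move: hd; rewrite eq_sym (negbTE hcd).
  have : size (filter (fun e => (e != c) && (e != d)) b) < size b.
    by apply: (filter_lt hd'); rewrite eqxx andbF.
  by rewrite addn2.
case: (eqVneq e d) => [ed|ed].
  subst e => /=.
  have hc' : c \in b by move: hc; rewrite (negbTE hcd).
  have : size (filter (fun e => (e != c) && (e != d)) b) < size b.
    by apply: (filter_lt hc'); rewrite eqxx.
  by rewrite addn2.
rewrite /=.
have hc' : c \in b by move: hc; rewrite eq_sym (negbTE ec).
have hd' : d \in b by move: hd; rewrite eq_sym (negbTE ed).
by have := IH hc' hd' hcd; rewrite addSn.
Qed.

Lemma size_remove2_le c d b n : c \in b -> d \in b -> c != d -> size b <= n.+1 ->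
  size (remove2 c d b) <= n.
Proof. move=> h1 h2 h3 h4; have := size_remove2 h1 h2 h3; lia. Qed.

Lemma domin_fuel f : forall f' b, size b <= f -> size b <= f' -> domin f b = domin f' b.
Proof.
elim: f => [|f IH] [|f'] b h1 h2 //.
- by case: b h1 h2.
- by case: b h1 h2.
- rewrite /=; congr Game.
  + apply/eq_in_map => c; rewrite mem_filter => /andP [hc' hc]; apply: IH.
    * have := size_remove2 hc hc' (c := c) (d := (c.1, c.2.+1)).
      have ne : c != (c.1, c.2.+1) by case: c {hc hc'} => x y; apply/negP => /eqP/(f_equal snd) /= e; lia.
      by move=> _; apply: size_remove2_le hc hc' ne _.
    * have := size_remove2 hc hc' (c := c) (d := (c.1, c.2.+1)).
      have ne : c != (c.1, c.2.+1) by case: c {hc hc'} => x y; apply/negP => /eqP/(f_equal snd) /= e; lia.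
      by move=> _; apply: size_remove2_le hc hc' ne _.
  + apply/eq_in_map => c; rewrite mem_filter => /andP [hc' hc]; apply: IH.
    * have := size_remove2 hc hc' (c := c) (d := (c.1.+1, c.2)).
      have ne : c != (c.1.+1, c.2) by case: c {hc hc'} => x y; apply/negP => /eqP/(f_equal fst) /= e; lia.
      by move=> _; apply: size_remove2_le hc hc' ne _.
    * have := size_remove2 hc hc' (c := c) (d := (c.1.+1, c.2)).
      have ne : c != (c.1.+1, c.2) by case: c {hc hc'} => x y; apply/negP => /eqP/(f_equal fst) /= e; lia.
      by move=> _; apply: size_remove2_le hc hc' ne _.
Qed.

Definition sh (s : nat) (c : nat * nat) : nat * nat := (c.1 + s, c.2).

Lemma sh_inj s : injective (sh s).
Proof. move=> [x y] [x' y'] /= [e1 e2]; congr pair; lia. Qed.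

Lemma remove2_sh s c d b :
  remove2 (sh s c) (sh s d) (map (sh s) b) = map (sh s) (remove2 c d b).
Proof.
rewrite /remove2 filter_map; congr map; apply: eq_filter => e /=.
by rewrite !(inj_eq (@sh_inj s)).
Qed.

Lemma domin_shift s f : forall b, domin f (map (sh s) b) = domin f b.
Proof.
elim: f => [|f IH] b //=; congr Game.
- rewrite filter_map -map_comp.
  rewrite (@eq_filter _ _ (fun c => (c.1, c.2.+1) \in b)); last first.
    move=> c /=; change ((sh s (c.1, c.2.+1)) \in map (sh s) b = ((c.1, c.2.+1) \in b)).
    by rewrite (mem_map (@sh_inj s)).
  apply: eq_map => c /=.
  change (domin f (remove2 (sh s c) (sh s (c.1, c.2.+1)) (map (sh s) b)) =
          domin f (remove2 c (c.1, c.2.+1) b)).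
  by rewrite remove2_sh IH.
- rewrite filter_map -map_comp.
  rewrite (@eq_filter _ _ (fun c => (c.1.+1, c.2) \in b)); last first.
    move=> c /=; change ((sh s (c.1.+1, c.2)) \in map (sh s) b = ((c.1.+1, c.2) \in b)).
    by rewrite (mem_map (@sh_inj s)).
  apply: eq_map => c /=.
  change (domin f (remove2 (sh s c) (sh s (c.1.+1, c.2)) (map (sh s) b)) =
          domin f (remove2 c (c.1.+1, c.2) b)).
  by rewrite remove2_sh IH.
Qed.

Definition flat (b : seq (nat * nat)) := all (fun c => c.2 == 0) b.

Definition sepb (b1 b2 : seq (nat * nat)) := forall c d, c \in b1 -> d \in b2 ->
  [&& c.1 != d.1, c.1.+1 != d.1 & d.1.+1 != c.1].

Lemma domin_left f b : flat b -> leftopts (domin f b) = [::].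
Proof.
case: f => //= f fb.
rewrite (@eq_in_filter (nat * nat)%type _ pred0) ?filter_pred0 // => c hc.
apply/negbTE/negP => h; move/allP: fb => /(_ _ h) /=.
by [].
Qed.

Lemma domin_right f b : rightopts (domin f.+1 b) =
  [seq domin f (remove2 c (c.1.+1, c.2) b) | c <- b & (c.1.+1, c.2) \in b].
Proof. by []. Qed.

Lemma game_eta G : G = Game (leftopts G) (rightopts G).
Proof. by case: G. Qed.

Lemma flat_sub b b' : flat b -> {subset b' <= b} -> flat b'.
Proof. by move=> /allP h sub; apply/allP => x /sub /h. Qed.

Lemma neq_r (c : nat * nat) : c != (c.1.+1, c.2).
Proof. by case: c => x y; apply/negP => /eqP/(f_equal fst) /= e; lia. Qed.

Lemma domin_sep f : forall b1 b2, flat b1 -> flat b2 -> sepb b1 b2 ->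
  size b1 + size b2 <= f -> domin f (b1 ++ b2) = gadd (domin f b1) (domin f b2).
Proof.
elim: f => [|f IH] b1 b2 f1 f2 sp hs.
  by move: hs; case: b1 {f1 sp} => //; case: b2 {f2}.
rewrite (game_eta (domin _ (_ ++ _))) gadd_eq; congr Game.
  have fc : flat (b1 ++ b2) by rewrite /flat all_cat; apply/andP.
  by rewrite !domin_left.
rewrite !domin_right filter_cat map_cat; congr (_ ++ _).
- rewrite -map_comp.
  rewrite (@eq_in_filter _ _ (fun c => (c.1.+1, c.2) \in b1)); last first.
    move=> c hc /=; rewrite mem_cat; case h: ((c.1.+1, c.2) \in b2); last by rewrite orbF.
    by have := sp _ _ hc h; rewrite /= eqxx andbF.
  apply/eq_in_map => c; rewrite mem_filter => /andP [hc' hc] /=.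
  have hsz := size_remove2 hc hc' (neq_r c).
  have h0 : size (remove2 c (c.1.+1, c.2) b1) + 2 <= size b1 by apply: leq_trans hsz _.
  have -> : remove2 c (c.1.+1, c.2) (b1 ++ b2) = remove2 c (c.1.+1, c.2) b1 ++ b2.
    rewrite /remove2 filter_cat; congr (_ ++ _); apply/all_filterP/allP => e he.
    have := sp _ _ hc he; case/and3P => h1 h2 _.
    apply/andP; split; apply/negP => /eqP ee; subst e; by rewrite eqxx in h1 h2.
  rewrite IH //.
  + congr gadd; exact: (@domin_fuel f f.+1 b2 ltac:(lia) ltac:(lia)).
  + by apply: flat_sub f1 _ => x; rewrite mem_filter => /andP [].
  + by move=> x y; rewrite mem_filter => /andP [_ hx]; apply: sp.
  + lia.
- rewrite -map_comp.
  rewrite (@eq_in_filter _ _ (fun c => (c.1.+1, c.2) \in b2)); last first.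
    move=> c hc /=; rewrite mem_cat; case h: ((c.1.+1, c.2) \in b1) => //=.
    by have := sp _ _ h hc; rewrite /= eqxx !andbF.
  apply/eq_in_map => c; rewrite mem_filter => /andP [hc' hc] /=.
  have hsz := size_remove2 hc hc' (neq_r c).
  have h0 : size (remove2 c (c.1.+1, c.2) b2) + 2 <= size b2 by apply: leq_trans hsz _.
  have -> : remove2 c (c.1.+1, c.2) (b1 ++ b2) = b1 ++ remove2 c (c.1.+1, c.2) b2.
    rewrite /remove2 filter_cat; congr (_ ++ _); apply/all_filterP/allP => e he.
    have := sp _ _ he hc; case/and3P => h1 _ h3.
    apply/andP; split; apply/negP => /eqP ee; subst e; first by rewrite eqxx in h1.
    by rewrite /= eqxx in h3.
  rewrite IH //.
  + rewrite (@domin_fuel f f.+1 b1) //; lia.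
  + by apply: flat_sub f2 _ => x; rewrite mem_filter => /andP [].
  + by move=> x y hx; rewrite mem_filter => /andP [_ hy]; apply: sp.
  + lia.
Qed.

Lemma pr_inj : injective (fun i : nat => (i, 0)).
Proof. by move=> x y [] . Qed.

Lemma size_strip n : size (strip n) = n.
Proof. by rewrite size_map size_iota. Qed.

Lemma flat_strip n : flat (strip n).
Proof. by apply/allP => c /mapP [i _ ->]. Qed.

Lemma flat_sh s b : flat b -> flat (map (sh s) b).
Proof. by move=> /allP h; apply/allP => c /mapP [x /h hx ->]. Qed.

Lemma D_def n : D n = domin n (strip n).
Proof. by rewrite /D size_strip. Qed.

Lemma mem_strip x y n : ((x, y) \in strip n) = (y == 0) && (x < n).
Proof.
apply/mapP/andP.
- by move=> [i]; rewrite mem_iota => hi [-> ->]; split => //; lia.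
- by move=> [/eqP -> hx]; exists x => //; rewrite mem_iota; lia.
Qed.

Lemma strip_split i k :
  remove2 (i, 0) (i.+1, 0) (strip (i + k.+2)) = strip i ++ map (sh i.+2) (strip k).
Proof.
rewrite /strip iotaD map_cat /remove2 filter_cat add0n /=.
rewrite eqxx /=.
have -> : ((i.+1, 0) != (i, 0)) = true by apply/negP => /eqP/(f_equal fst) /= e; lia.
rewrite eqxx andbF /=.
congr (_ ++ _).
  apply/all_filterP/allP => c /mapP [j]; rewrite mem_iota => hj ->.
  by apply/andP; split; apply/negP => /eqP/(f_equal fst) /= e; lia.
rewrite (_ : [seq x <- _ | _] = [seq (i0, 0) | i0 <- iota i.+2 k]); last first.
  apply/all_filterP/allP => c /mapP [j]; rewrite mem_iota => hj ->.
  by apply/andP; split; apply/negP => /eqP/(f_equal fst) /= e; lia.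
rewrite -{1}(addn0 i.+2) iotaDl -!map_comp; apply: eq_map => j /=.
by rewrite /sh /= addnC.
Qed.

Lemma D_eq n : D n = Game [::] [seq gadd (D i) (D (n.-2 - i)) | i <- iota 0 n.-1].
Proof.
case: n => [|m]; first by [].
rewrite D_def (game_eta (domin _ _)) domin_left ?flat_strip //; congr Game.
rewrite domin_right.
rewrite [X in filter _ X]/strip filter_map -map_comp.
rewrite (@eq_in_filter _ _ (fun j => j < m)); last first.
  by move=> j hj /=; rewrite mem_strip.
have -> : [seq x <- iota 0 m.+1 | x < m] = iota 0 m.
  rewrite -addn1 iotaD filter_cat /= add0n ltnn cats0.
  by apply/all_filterP/allP => j; rewrite mem_iota.
apply/eq_in_map => j; rewrite mem_iota => hj.
change (domin m (remove2 (j,0) (j.+1,0) (strip m.+1)) = gadd (D j) (D (m.-1 - j))).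
rewrite (_ : strip m.+1 = strip (j + (m.-1 - j).+2)); last by congr strip; lia.
rewrite strip_split domin_sep.
- rewrite domin_shift !D_def; congr gadd.
  + by apply: domin_fuel; rewrite size_strip; lia.
  + by apply: domin_fuel; rewrite size_strip; lia.
- exact: flat_strip.
- apply: flat_sh; exact: flat_strip.
- move=> [x y] [x' y']; rewrite mem_strip => /andP [_ hx] /mapP [[z w]].
  rewrite mem_strip => /andP [_ hz] [-> ->] /=; apply/and3P; split; apply/eqP; lia.
- by rewrite size_map !size_strip; lia.
Qed.

Fixpoint Pf (n : nat) : nat :=
  match n with
  | 0 => 0 | 1 => 0 | 2 => 1 | 3 => 1 | 4 => 1 | 5 => 2
  | S (S (S (S (S (S n'))))) => (Pf n').+2
  end.
Fixpoint Qf (n : nat) : nat :=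
  match n with
  | 0 => 0 | 1 => 0 | 2 => 1 | 3 => 1 | 4 => 2 | 5 => 2
  | S (S (S (S (S (S n'))))) => (Qf n').+3
  end.

Lemma Pf_shift m c : Pf (6 * m + c) = 2 * m + Pf c.
Proof.
elim: m => [|m IH]; first by rewrite !muln0 !add0n.
have -> : 6 * m.+1 + c = (6 * m + c).+1.+1.+1.+1.+1.+1 by lia.
rewrite /= IH; lia.
Qed.
Lemma Qf_shift m c : Qf (6 * m + c) = 3 * m + Qf c.
Proof.
elim: m => [|m IH]; first by rewrite !muln0 !add0n.
have -> : 6 * m.+1 + c = (6 * m + c).+1.+1.+1.+1.+1.+1 by lia.
rewrite /= IH; lia.
Qed.

Lemma dec6 n : exists a r, r < 6 /\ n = 6 * a + r.
Proof. exists (n %/ 6), (n %% 6); split; [by rewrite ltn_pmod | by rewrite mulnC -divn_eq]. Qed.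

Lemma valid_PQ n : valid (Pf n) (Qf n).
Proof.
have [a [r [hr ->]]] := dec6 n; rewrite /valid Pf_shift Qf_shift.
by case: r hr => [|[|[|[|[|[|r]]]]]] hr //=; lia.
Qed.

Lemma Pf_pos n : 2 <= n -> 0 < Pf n.
Proof.
have [a [r [hr ->]]] := dec6 n; rewrite Pf_shift.
by case: r hr => [|[|[|[|[|[|r]]]]]] hr //=; lia.
Qed.

Lemma arithA i j : exists c d, Oin (Pf (i + j + 2)) (Qf (i + j + 2)) c d /\
  (c <= Pf i + Pf j /\ Qf i + Qf j <= d).
Proof.
apply: (pickO (P := fun c d => c <= Pf i + Pf j /\ Qf i + Qf j <= d)).
have [a [r1 [h1 ->]]] := dec6 i; have [b [r2 [h2 ->]]] := dec6 j.
rewrite (_ : 6 * a + r1 + (6 * b + r2) + 2 = 6 * (a + b) + (r1 + r2 + 2)); last by lia.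
rewrite !Pf_shift !Qf_shift.
by case: r1 h1 => [|[|[|[|[|[|r1]]]]]] h1 //; case: r2 h2 => [|[|[|[|[|[|r2]]]]]] h2 //=; lia.
Qed.

Lemma arithB n c d : 2 <= n -> Oin (Pf n) (Qf n) c d ->
  exists i, i < n.-1 /\ (Pf i + Pf (n.-2 - i) <= c /\ d <= Qf i + Qf (n.-2 - i)).
Proof.
have [k [r [hr ->]]] := dec6 n; rewrite /Oin Pf_shift Qf_shift => hn.
case: r hr hn => [|[|[|[|[|[|r]]]]]] hr hn //=.
- move=> ho; exists 0; rewrite (_ : (6 * k + 0).-2 - 0 = 6 * (k - 1) + 4); last by lia.
  rewrite Pf_shift Qf_shift /=; lia.
- move=> ho; exists 1; rewrite (_ : (6 * k + 1).-2 - 1 = 6 * (k - 1) + 4); last by lia.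
  rewrite Pf_shift Qf_shift /=; lia.
- move=> ho; exists 0; rewrite (_ : (6 * k + 2).-2 - 0 = 6 * k + 0); last by lia.
  rewrite Pf_shift Qf_shift /=; lia.
- move=> ho; exists 0; rewrite (_ : (6 * k + 3).-2 - 0 = 6 * k + 1); last by lia.
  rewrite Pf_shift Qf_shift /=; lia.
- move=> ho; case: (posnP k) => hk.
  + subst k; case: (posnP c) => hc.
    * exists 1; rewrite /=; lia.
    * exists 0; rewrite /=; lia.
  + exists 4; rewrite (_ : (6 * k + 4).-2 - 4 = 6 * (k - 1) + 4); last by lia.
    rewrite Pf_shift Qf_shift /=; lia.
- move=> ho; exists 0; rewrite (_ : (6 * k + 5).-2 - 0 = 6 * k + 3); last by lia.
  rewrite Pf_shift Qf_shift /=; lia.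
Qed.

Lemma In_mem (T : eqType) (x : T) s : List.In x s -> x \in s.
Proof. elim: s => [|a s IH] //= [->|/IH h]; rewrite inE ?eqxx ?h ?orbT //. Qed.
Lemma mem_In (T : eqType) (x : T) s : x \in s -> List.In x s.
Proof. elim: s => [|a s IH] //=; rewrite inE => /orP [/eqP ->|/IH h]; [by left | by right]. Qed.

Lemma D_J_n N : forall n, n <= N ->
  geb (D n) (J (Pf n) (Qf n)) /\ geb (J (Pf n) (Qf n)) (D n).
Proof.
elim: N => [|N IH] n hn.
  have -> : n = 0 by lia.
  by rewrite D_eq; split.
case: n hn => [|[|m]] hn.
- by rewrite D_eq; split.
- by rewrite D_eq; split.
have v := valid_PQ m.+2.
have hp : 0 < Pf m.+2 by apply: Pf_pos.
have hpq : Pf m.+2 <= Qf m.+2 by move: v => /andP [].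
have IHi : forall i, i <= m -> geb (D i) (J (Pf i) (Qf i)) /\ geb (J (Pf i) (Qf i)) (D i).
  by move=> i hi; apply: IH; lia.
rewrite D_eq; split.
- apply: geb_intro => [//|g /In_map_iff [i [eg /In_mem hi0]]]; subst g.
  move: hi0; rewrite mem_iota /= => hi.
  have [c [d [ho hcd]]] := arithA i (m - i).
  rewrite (_ : i + (m - i) + 2 = m.+2) in ho; last by lia.
  exists (J c d); split; first by apply/J_opts => //; exists c, d.
  have [a1 _] := IHi i ltac:(lia); have [a2 _] := IHi (m - i) ltac:(lia).
  apply: geb_trans (geb_add a1 a2) _.
  have [s1 _] := J_add (valid_PQ i) (valid_PQ (m - i)).
  apply: geb_trans s1 _.
  have [vc _] := Oin_valid v hp ho.
  apply: J_mono => //; last by lia.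
  by move: (valid_PQ i) (valid_PQ (m - i)); rewrite /valid; lia.
  by lia.
- apply: geb_intro => [e|g].
    by have := J_nil v e; lia.
  move/(J_opts hp hpq) => [c [d [-> ho]]].
  have [i [hi hcd]] := arithB (isT : 2 <= m.+2) ho.
  rewrite /= in hi hcd.
  exists (gadd (D i) (D (m - i))); split.
    apply/In_map_iff; exists i; split => //; apply: mem_In; rewrite mem_iota; lia.
  have [_ b1] := IHi i ltac:(lia); have [_ b2] := IHi (m - i) ltac:(lia).
  apply: geb_trans _ (geb_add b1 b2).
  have [_ s2] := J_add (valid_PQ i) (valid_PQ (m - i)).
  apply: geb_trans _ s2.
  have [vc _] := Oin_valid v hp ho.
  apply: J_mono => //; try lia.
  by move: (valid_PQ i) (valid_PQ (m - i)); rewrite /valid; lia.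
Qed.

Lemma D_J n : geb (D n) (J (Pf n) (Qf n)) /\ geb (J (Pf n) (Qf n)) (D n).
Proof. exact: (@D_J_n n n (leqnn n)). Qed.

Lemma ld_D_n N : forall n, n <= N -> ld (D n).
Proof.
elim: N => [|N IH] n hn.
  by have -> : n = 0 by lia.
rewrite D_eq /=; apply/all_In => g /In_map_iff [i [eg /In_mem hi0]]; subst g.
move: hi0; rewrite mem_iota /= => hi.
by apply: ld_add; apply: IH; lia.
Qed.
Lemma ld_D n : ld (D n).
Proof. exact: (@ld_D_n n n (leqnn n)). Qed.

Lemma ld_gmul k G : ld G -> ld (gmul k G).
Proof. by move=> h; elim: k => [|k IH] //=; apply: ld_add. Qed.

Lemma gmul_J k : geb (gmul k gsharp) (J (2 * k) (3 * k)) /\ geb (J (2 * k) (3 * k)) (gmul k gsharp).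
Proof.
elim: k => [|k [i1 i2]]; first by split.
have v23 : valid 2 3 by [].
have vk : valid (2 * k) (3 * k) by rewrite /valid; lia.
have [s1 s2] := J_add v23 vk.
rewrite (_ : 2 * k.+1 = 2 + 2 * k); last by lia.
rewrite (_ : 3 * k.+1 = 3 + 3 * k); last by lia.
have g1 : geb gsharp (J 2 3) by [].
have g2 : geb (J 2 3) gsharp by [].
split => /=.
- exact: geb_trans (geb_add g1 i1) s1.
- exact: geb_trans s2 (geb_add g2 i2).
Qed.

Lemma target k p q t : valid p q -> t = J p q ->
  geb (gadd (gmul k gsharp) t) (J (2 * k + p) (3 * k + q)) /\
  geb (J (2 * k + p) (3 * k + q)) (gadd (gmul k gsharp) t).
Proof.
move=> v ->; have [i1 i2] := gmul_J k.
have vk : valid (2 * k) (3 * k) by rewrite /valid; lia.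
have [s1 s2] := J_add vk v.
split.
- exact: geb_trans (geb_add i1 (geb_refl _)) s1.
- exact: geb_trans s2 (geb_add i2 (geb_refl _)).
Qed.

Lemma final (U : game -> Prop) n k r p q t : n = 6 * k + r -> valid p q -> t = J p q ->
  Pf r = p -> Qf r = q -> ld t ->
  equivU U (D n) (gadd (gmul k gsharp) t).
Proof.
move=> hn v ht hp hq lt.
have [a1 a2] := D_J n.
have [b1 b2] := target k v ht.
rewrite hn Pf_shift Qf_shift hp hq in a1 a2.
apply: sem_equiv.
- exact: ld_D.
- apply: ld_add => //; apply: ld_gmul; by [].
- by rewrite hn; exact: geb_trans a1 b2.
- by rewrite hn; exact: geb_trans b1 a2.
Qed.

Lemma gmul_add0 U k G : ld G -> equivU U (gmul k G) (gadd (gmul k G) gzero) -> True.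
Proof. by []. Qed.

Lemma final0 (U : game -> Prop) n k r : n = 6 * k + r -> Pf r = 0 -> Qf r = 0 ->
  equivU U (D n) (gmul k gsharp).
Proof.
move=> hn hp hq.
have [a1 a2] := D_J n.
have [b1 b2] := gmul_J k.
rewrite hn Pf_shift Qf_shift hp hq !addn0 in a1 a2.
apply: sem_equiv.
- exact: ld_D.
- by apply: ld_gmul.
- by rewrite hn; exact: geb_trans a1 b2.
- by rewrite hn; exact: geb_trans b1 a2.
Qed.

Unset Implicit Arguments.
Set Strict Implicit.

Theorem mainTheorem8 (U : game -> Prop) (n k r : nat) :
  universe U -> r <= 5 -> n = 6 * k + r ->
  [/\ (r = 0 \/ r = 1) -> equivU U (D n) (gmul k gsharp),
      (r = 2 \/ r = 3) -> equivU U (D n) (gadd (gmul k gsharp) (gbar 1)),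
      r = 4 -> equivU U (D n) (gadd (gmul k gsharp) gbar1_0) &
      r = 5 -> equivU U (D n) (gadd (gmul k gsharp) (gbar 2))].
Proof.
move=> _ _ hn; split.
- by case=> hr; subst r; apply: (final0 hn).
- by case=> hr; subst r; apply: (final hn (p := 1) (q := 1)).
- by move=> hr; subst r; apply: (final hn (p := 1) (q := 2)).
- by move=> hr; subst r; apply: (final hn (p := 2) (q := 2)).
Qed.
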